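(* Let $A=(a_{ij})_{i,j=1}^n$ be an $n\times n$ matrix all of whose entries are $0$ or $1$, and such that $a_{ij}=1$ whenever $1\le j\le i\le n$. Then $$\det A=\prod_{i=2}^n(1-a_{i-1,i})=\begin{cases}1,& a_{i-1,i}=0 \text{ for all } 2\le i\le n,\\ 0,&\text{otherwise.}\end{cases}$$ *)

(* Defs.v *)
From mathcomp Require Import all_boot all_order all_algebra.
Set Implicit Arguments. Unset Strict Implicit. Unset Printing Implicit Defensive.
Import GRing.Theory.
Local Open Scope ring_scope.

(* Entry of an n x n matrix addressed by natural-number indices (0-based):
   natentry A i j = A i j if i < n and j < n, and 0 otherwise. *)
Definition natentry (R : pzRingType) (n : nat) (A : 'M[R]_n) (i j : nat) : R :=
  match insub i, insub j with
  | Some i', Some j' => A i' j'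
  | _, _ => 0
  end.

(* Main.v *)
Require Import Defs.
From mathcomp Require Import all_boot all_order all_algebra.
Import GRing.Theory.
Local Open Scope ring_scope.

Lemma natentryE (R : comNzRingType) m (A : 'M[R]_m.+1) k :
  (k < m)%N -> natentry A k k.+1 = A (inord k) (inord k.+1).
Proof.
move=> km; rewrite /natentry.
case: insubP => [i _ ei|]; last by rewrite ltnS ltnW.
case: insubP => [j _ ej|]; last by rewrite ltnS km.
have -> : i = inord k by apply: val_inj; rewrite /= inordK // ltnS ltnW // ei.
have -> : j = inord k.+1 by apply: val_inj; rewrite /= inordK // ej.
by [].
Qed.

Lemma rowop (R : comNzRingType) m (A : 'M[R]_m.+1) :
  let S := \matrix_(i, j) ((j.+1 == i :> nat)%:R : R) in
  forall i j, ((1%:M - S) *m A) i j =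
     A i j - (if (0 < i)%N then A (inord i.-1) j else 0).
Proof.
move=> S i j; rewrite mulmxBl mul1mx !mxE; congr (_ - _).
rewrite (eq_bigr (fun k : 'I_m.+1 => if (k.+1 == i :> nat) then A k j else 0));
  last by move=> k _; rewrite mxE; case: eqP => _; rewrite ?mul1r ?mul0r.
rewrite -big_mkcond /=.
case: ifP => [ip|]; last first.
  move=> /negbT; rewrite lt0n negbK => /eqP i0.
  by rewrite big_pred0 // => k; rewrite i0.
rewrite (big_pred1 (inord i.-1)) // => k /=.
apply/eqP/eqP => [<-|->]; first by apply: val_inj; rewrite /= inordK // ej.
by rewrite inordK ?prednK // ltnW.
Qed.

Theorem lemma3p1 (R : comNzRingType) (n : nat) (A : 'M[R]_n)
  (H01 : forall i j : 'I_n, A i j = 0 \/ A i j = 1)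
  (Hlow : forall i j : 'I_n, (j <= i)%N -> A i j = 1) :
  \det A = \prod_(0 <= k < n.-1) (1 - natentry A k k.+1)
  /\ \det A = (if [forall i : 'I_n, forall j : 'I_n,
                    ((i : nat).+1 == j) ==> (A i j == 0)]
               then 1 else 0).
Proof.
case: n A H01 Hlow => [|m] A H01 Hlow.
  rewrite det_mx00 big_geq //; split => //.
  by case: forallP => // -[]; case.
set S := \matrix_(i, j) ((j.+1 == i :> nat)%:R : R) : 'M[R]_m.+1.
have detL : \det (1%:M - S) = 1.
  rewrite det_trig; last first.
    apply/is_trig_mxP => i j ij; rewrite !mxE.
    rewrite (_ : (i == j) = false); last by apply: ltn_eqF.
    by rewrite (gtn_eqF (ltn_trans ij (ltnSn j))) subr0.
  by apply: big1 => i _; rewrite !mxE eqxx (_ : (i.+1 == i :> nat) = false) ?subr0 // gtn_eqF.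
have eA : \det A = \prod_(i < m.+1) ((1%:M - S) *m A) i i.
  transitivity (\det ((1%:M - S) *m A)); first by rewrite det_mulmx detL mul1r.
  rewrite -det_tr det_trig.
    by apply: eq_bigr => i _; rewrite mxE.
  apply/is_trig_mxP => i j ij; rewrite mxE rowop.
  have j0 : (0 < j)%N by apply: leq_ltn_trans ij.
  rewrite j0 !Hlow ?subrr ?(ltnW ij) // inordK; first by rewrite -ltnS prednK.
  exact: leq_ltn_trans (leq_pred j) (ltn_ord j).
have eP : \det A = \prod_(k < m) (1 - A (inord k) (inord k.+1)).
  rewrite eA big_ord_recl rowop /= subr0 Hlow // mul1r.
  apply: eq_bigr => k _; rewrite rowop Hlow // lift0 /=.
  by rewrite (_ : lift ord0 k = inord k.+1) //; apply: val_inj; rewrite /= inordK // /bump ltnS.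
split.
  rewrite eP big_mkord; apply: eq_bigr => k _; by rewrite natentryE.
rewrite eP; case: ifP => [/forallP H|].
  apply: big1 => k _.
  have /forallP/(_ (inord k.+1)) := H (inord k).
  rewrite !inordK ?eqxx /= ?ltnS ?(ltnW (ltn_ord k)) //.
  by move/eqP->; rewrite subr0.
move/negbT/forallPn => [i /forallPn [j]].
rewrite negb_imply => /andP [/eqP ij Aij].
have im : (i < m)%N by rewrite -ltnS ij.
rewrite (bigD1 (Ordinal im)) //=.
have -> : A (inord i) (inord i.+1) = A i j.
  by congr (A _ _); apply: val_inj; rewrite /= inordK // ij.
by case: (H01 i j) Aij => ->; rewrite ?eqxx // subrr mul0r.
Qed.
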